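(* For every homogeneous $f\in\mathbb Z[x_1,\dots,x_n]$ of degree $n-1$, $$\langle f\rangle_n^q=T_1(T_1+qT_2)\cdots(T_1+qT_2+\cdots+q^{n-2}T_{n-1})f.$$
   Context: $\Delta_n=\prod_{1\le i<j\le n}(x_i-x_j)$ and $\widehat\Delta_n^q=\prod_{1\le i,\ i+1<j\le n}(qx_i-x_j)$. The $q$-divided symmetrization is $\langle f\rangle_n^q=\sum_{\sigma\in S_n}\sigma\!\left(\frac{f\,\widehat\Delta_n^q}{\Delta_n}\right)$, where $\sigma$ permutes the variables. $R_if=f(x_1,\dots,x_{i-1},0,x_i,\dots)$, $T_if=\frac1{x_i}(R_{i+1}f-R_if)$, operators composed right to left. *)

(* Defs.v *)
From HB Require Import structures.
From mathcomp Require Import all_boot all_order all_algebra all_fingroup.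
From mathcomp Require Import fraction.
From mathcomp.multinomials Require Import mpoly.
Set Implicit Arguments. Unset Strict Implicit. Unset Printing Implicit Defensive.
Import Order.TTheory GRing.Theory.
Local Open Scope ring_scope.

Notation "x %:F" := (@FracField.tofrac _ x) : ring_scope.

Notation Zq := {poly int}.
Definition q : Zq := 'X.

(* Polynomials in m variables x_1..x_m (0-indexed as 'X_0 .. 'X_(m-1)). *)
Notation P m := {mpoly Zq[m]}.

Definition Delta (N : nat) : P N :=
  \prod_(i < N) \prod_(j < N | (i < j)%N) ('X_i - 'X_j).

Definition Deltahat (N : nat) : P N :=
  \prod_(i < N) \prod_(j < N | (i.+1 < j)%N) (q%:MP * 'X_i - 'X_j).

Definition qdivsym (N : nat) (f : P N) : {fraction P N} :=
  \sum_(s : 'S_N) (msym s (f * Deltahat N))%:F / (msym s (Delta N))%:F.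

(* R_i (0-indexed position i): f(x_1,..,x_m+1) |-> f(x_1,..,x_{i},0,x_{i+1},..,x_m),
   i.e. 0 is inserted as the (i+1)-th argument (paper's R_{i+1}). *)
(* the variable x_{k+1} of P m, or 0 if k >= m (never used out of range) *)
Definition Xn (m k : nat) : P m :=
  if insub k is Some i then 'X_(i : 'I_m) else 0.

Definition Rins (m : nat) (i : nat) (f : P m.+1) : P m :=
  f \mPo [tuple (if (j < i)%N then Xn m j
                 else if j == i :> nat then 0 else Xn m j.-1) | j < m.+1].

(* Exact division by the variable x_i: the quotient of p by 'X_i
   (monomials not divisible by 'X_i are dropped; in the use below the
   division is always exact). *)
Definition divX (m : nat) (i : 'I_m) (p : P m) : P m :=
  \sum_(mm <- msupp p | (0 < mm i)%N) p@_mm *: 'X_[(mm - U_(i))%MM].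

(* T (0-indexed i, i.e. the paper's T_{i+1}):
   T_{i+1} f = (R_{i+2} f - R_{i+1} f) / x_{i+1}. *)
Definition Top (m : nat) (i : 'I_m) (f : P m.+1) : P m :=
  divX i (Rins i.+1 f - Rins i f).

Definition Sop (m : nat) (f : P m.+1) : P m :=
  \sum_(i < m) (q ^+ i) *: Top i f.

(* T_1 (T_1 + q T_2) ... (T_1 + ... + q^{k-1} T_k) applied to f in k+1 variables
   (operators composed right to left: the rightmost factor acts first). *)
Fixpoint Ops (k : nat) : P k.+1 -> P 1 :=
  match k with
  | 0 => fun f => f
  | k'.+1 => fun f => @Ops k' (@Sop k'.+1 f)
  end.

Definition embed1 (N : nat) (p : P 1) : P N.+1 :=
  p \mPo [tuple 'X_(ord0 : 'I_N.+1) | _ < 1].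

(* Main.v *)
Require Import Defs.
From HB Require Import structures.
From mathcomp Require Import all_boot all_order all_algebra all_fingroup.
From mathcomp Require Import fraction.
From mathcomp.multinomials Require Import mpoly.
Set Implicit Arguments. Unset Strict Implicit. Unset Printing Implicit Defensive.
Import Order.TTheory GRing.Theory.
Local Open Scope ring_scope.

Lemma comp_mpolyA (R : comRingType) n k l (p : {mpoly R[n]})
  (T : n.-tuple {mpoly R[k]}) (U : k.-tuple {mpoly R[l]}) :
  (p \mPo T) \mPo U = p \mPo [tuple (tnth T i \mPo U) | i < n].
Proof.
rewrite (comp_mpolyEX p T) (comp_mpolyEX p) raddf_sum /=.
apply: eq_bigr => m _; rewrite comp_mpolyZ !comp_mpolyX rmorph_prod /=.
congr (_ *: _); apply: eq_bigr => i _; by rewrite rmorphXn /= tnth_mktuple.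
Qed.

Lemma msym_mPoT (R : comRingType) n k (s : 'S_k) (p : {mpoly R[n]})
  (T : n.-tuple {mpoly R[k]}) :
  msym s (p \mPo T) = p \mPo [tuple msym s (tnth T i) | i < n].
Proof.
rewrite (comp_mpolyEX p T) (comp_mpolyEX p) raddf_sum /=.
apply: eq_bigr => m _; rewrite msymZ !comp_mpolyX rmorph_prod /=.
congr (_ *: _); apply: eq_bigr => i _; by rewrite rmorphXn /= tnth_mktuple.
Qed.

Lemma msymXU (R : comRingType) n (s : 'S_n) (i : 'I_n) :
  msym s ('X_i : {mpoly R[n]}) = 'X_(s i).
Proof.
rewrite msymX; congr 'X_[_]; apply/mnmP => j; rewrite !mnmE.
by rewrite -[in RHS](permKV s j) (inj_eq perm_inj).
Qed.

Definition Asym (R : comRingType) N (g : {mpoly R[N]}) : {mpoly R[N]} :=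
  \sum_(s : 'S_N) (-1) ^+ s * msym s g.

Lemma Asym0 (R : comRingType) N : Asym (0 : {mpoly R[N]}) = 0.
Proof. by rewrite /Asym big1 // => s _; rewrite msym0 mulr0. Qed.

Lemma AsymD (R : comRingType) N (g h : {mpoly R[N]}) :
  Asym (g + h) = Asym g + Asym h.
Proof. by rewrite /Asym -big_split; apply: eq_bigr => s _; rewrite msymD mulrDr. Qed.

Lemma AsymZ (R : comRingType) N c (g : {mpoly R[N]}) : Asym (c *: g) = c *: Asym g.
Proof.
rewrite /Asym scaler_sumr; apply: eq_bigr => s _.
by rewrite msymZ scalerAr.
Qed.

Lemma Asym_sum (R : comRingType) N I (r : seq I) (P : pred I) (F : I -> {mpoly R[N]}) :
  Asym (\sum_(i <- r | P i) F i) = \sum_(i <- r | P i) Asym (F i).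
Proof. exact: (big_morph _ (@AsymD R N) (@Asym0 R N)). Qed.

Lemma msym_sign (R : comRingType) N (t : 'S_N) (b : bool) :
  msym t ((-1) ^+ b : {mpoly R[N]}) = (-1) ^+ b.
Proof. by rewrite rmorphXn rmorphN1. Qed.

Lemma Asym_msym (R : comRingType) N (t : 'S_N) (g : {mpoly R[N]}) :
  msym t (Asym g) = (-1) ^+ t * Asym g.
Proof.
rewrite /Asym rmorph_sum mulr_sumr /=.
rewrite (reindex_inj (@mulIg _ t^-1)%g) /=.
apply: eq_bigr => s _; rewrite rmorphM rmorphXn rmorphN1 /= -msymMm mulgKV.
by rewrite odd_permM odd_permV signr_addb mulrCA mulrA.
Qed.

Lemma Asym_symmul (R : comRingType) N (p g : {mpoly R[N]}) :
  (forall s, msym s p = p) -> Asym (p * g) = p * Asym g.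
Proof.
move=> sp; rewrite /Asym mulr_sumr; apply: eq_bigr => s _.
by rewrite msymM sp mulrCA.
Qed.

Lemma Asym_X (R : comRingType) N (m : 'X_{1..N}) :
  Asym ('X_[m] : {mpoly R[N]}) = \det (\matrix_(i, j) 'X_j ^+ m i).
Proof.
rewrite /Asym /determinant; apply: eq_bigr => s _; congr (_ * _).
rewrite (mpolyXE_id _ m) rmorph_prod; apply: eq_bigr => i _.
by rewrite rmorphXn /= msymXU mxE.
Qed.

Definition miota N : 'X_{1..N} := [multinom (i : nat) | i < N].

Definition esgn N : P N := \prod_(i < N) \prod_(j < N | (i < j)%N) (-1).

Lemma esgnK N : esgn N * esgn N = 1.
Proof.
rewrite /esgn -big_split big1 // => i _.
by rewrite -big_split big1 // => j _ /=; rewrite mulrNN mulr1.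
Qed.

Lemma msym_esgn N (s : 'S_N) : msym s (esgn N) = esgn N.
Proof.
rewrite /esgn rmorph_prod; apply: eq_bigr => i _.
by rewrite rmorph_prod; apply: eq_bigr => j _; rewrite rmorphN1.
Qed.

Lemma Asym_iota N : Asym ('X_[miota N] : P N) = esgn N * Delta N.
Proof.
rewrite Asym_X.
have -> : (\matrix_(i, j) 'X_j ^+ (miota N) i) = Vandermonde N (\row_j ('X_j : P N)).
  by apply/matrixP => i j; rewrite !mxE mnmE.
rewrite det_Vandermonde /esgn /Delta -big_split; apply: eq_bigr => i _.
rewrite -big_split; apply: eq_bigr => j _.
by rewrite !mxE /= mulNr mul1r opprB.
Qed.

Lemma msym_Delta N (s : 'S_N) : msym s (Delta N) = (-1) ^+ s * Delta N.
Proof.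
have h := Asym_msym s ('X_[miota N] : P N).
rewrite Asym_iota rmorphM /= msym_esgn in h.
have := congr1 (fun x => esgn N * x) h.
rewrite !mulrA esgnK !mul1r => ->.
by rewrite [esgn N * _]mulrC -!mulrA (mulrA (esgn N)) esgnK mul1r.
Qed.

Lemma sum_uniq_ge n (s : seq nat) :
  size s = n -> uniq s -> (\sum_(i < n) i <= \sum_(x <- s) x)%N.
Proof.
elim: n s => [|n IH] s hs us; first by rewrite big_ord0.
have [x xs xn] : exists2 x, x \in s & (n <= x)%N.
  case: (boolP (has (fun x => n <= x)%N s)) => [/hasP[x xs xn]|/hasPn hn].
    by exists x.
  have sub : {subset s <= iota 0 n}.
    by move=> x /hn; rewrite mem_iota /= add0n ltnNge.
  by have := uniq_leq_size us sub; rewrite size_iota hs ltnn.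
rewrite (perm_big _ (perm_to_rem xs)) big_cons big_ord_recr /= addnC.
apply: leq_add => //; apply: IH; last by rewrite rem_uniq.
by rewrite size_rem // hs.
Qed.

Lemma sum_uniq_mem (s : seq nat) y : uniq s -> y \in s ->
  (y + \sum_(i < (size s).-1) i <= \sum_(x <- s) x)%N.
Proof.
move=> us ys; rewrite (perm_big _ (perm_to_rem ys)) big_cons leq_add2l.
apply: sum_uniq_ge; last by rewrite rem_uniq.
by rewrite size_rem.
Qed.

Lemma mdeg_inj_lt N (m : 'X_{1..N}) : injective (fun i : 'I_N => m i) ->
  mdeg m = (\sum_(i < N) i)%N -> forall i, (m i < N)%N.
Proof.
move=> minj hdeg i.
set s := [seq m j | j <- enum 'I_N].
have us : uniq s by rewrite map_inj_uniq ?enum_uniq.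
have ss : size s = N by rewrite size_map size_enum_ord.
have sums : (\sum_(x <- s) x)%N = mdeg m by rewrite big_map big_enum mdegE.
have mis : m i \in s by apply: map_f; rewrite mem_enum.
have := sum_uniq_mem us mis; rewrite sums hdeg ss.
clear -i; case: N m i => [|N] m i; first by case: i.
by rewrite big_ord_recr /= addnC leq_add2l ltnS.
Qed.

Lemma detV N : \det (\matrix_(i, j) ('X_j : P N) ^+ i) = esgn N * Delta N.
Proof.
rewrite -Asym_iota Asym_X; congr (\det _).
by apply/matrixP => i j; rewrite !mxE mnmE.
Qed.

Lemma Asym_X_const N (m : 'X_{1..N}) : mdeg m = (\sum_(i < N) i)%N ->
  exists c : Zq, Asym ('X_[m] : P N) = c%:MP * Delta N.
Proof.
move=> hdeg; rewrite Asym_X.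
case: (boolP [forall i, forall j, (i != j) ==> (m i != m j)]) => [/forallP hi | ].
  have minj : injective (fun i : 'I_N => m i).
    move=> i j /eqP; apply: contraTeq => ij.
    by have /forallP/(_ j)/implyP/(_ ij) := hi i.
  have lt := mdeg_inj_lt minj hdeg.
  have finj : injective (fun i => Ordinal (lt i)).
    by move=> i j /(congr1 val) /= /minj.
  pose pi := perm finj.
  exists ((-1) ^+ pi * \prod_(i < N) \prod_(j < N | (i < j)%N) (-1)).
  have -> : (\matrix_(i, j) ('X_j : P N) ^+ m i) =
            perm_mx pi *m \matrix_(i, j) ('X_j : P N) ^+ i.
    by rewrite -row_permE; apply/matrixP => i j; rewrite !mxE permE.
  rewrite det_mulmx det_perm detV mulrA; congr (_ * _).
  rewrite rmorphM rmorphXn rmorphN1 /= rmorph_prod; congr (_ * _).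
  by apply: eq_bigr => i _; rewrite rmorph_prod; apply: eq_bigr => j _; rewrite rmorphN1.
rewrite negb_forall => /existsP[i]; rewrite negb_forall => /existsP[j].
rewrite negb_imply negbK => /andP[ij /eqP mij].
exists 0; rewrite mpolyC0 mul0r.
apply: (determinant_alternate ij) => k; by rewrite !mxE mij.
Qed.

Lemma Asym_const N (g : P N) : g \is (\sum_(i < N) i)%N.-homog ->
  exists c : Zq, Asym g = c%:MP * Delta N.
Proof.
move=> hg; rewrite (mpolyE g) Asym_sum big_seq.
apply: (big_ind (fun h => exists c : Zq, h = c%:MP * Delta N)).
- by exists 0; rewrite mpolyC0 mul0r.
- by move=> _ _ [c1 ->] [c2 ->]; exists (c1 + c2); rewrite mpolyCD mulrDl.
move=> m ms; have [c hc] := Asym_X_const (dhomog_mf hg ms).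
exists (g@_m * c); rewrite AsymZ hc -mul_mpolyC mulrA -mpolyCM //.
Qed.

Lemma XB_neq0 N (i j : 'I_N) : i != j -> ('X_i - 'X_j : P N) != 0.
Proof.
move=> ij; apply/eqP => /(congr1 (mcoeff U_(i))).
by rewrite mcoeffB !mcoeffXU eqxx eq_sym (negbTE ij) subr0 mcoeff0 => /eqP; rewrite oner_eq0.
Qed.

Lemma Delta_neq0 N : Delta N != 0.
Proof.
apply/prodf_neq0 => i _; apply/prodf_neq0 => j ij.
by apply: XB_neq0; rewrite neq_ltn ij.
Qed.

Lemma qdivsymE N (f : P N) :
  qdivsym f = (Asym (f * Deltahat N))%:F / (Delta N)%:F.
Proof.
rewrite /qdivsym /Asym rmorph_sum mulr_suml; apply: eq_bigr => s _.
rewrite msym_Delta !rmorphM rmorphXn rmorphN1 /=.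
by rewrite invfM invr_sign mulrCA mulrA.
Qed.

From mathcomp Require Import zify.

Lemma dhomog_big (R : comRingType) n I (r : seq I) (P : pred I)
  (F : I -> {mpoly R[n]}) (d : I -> nat) :
  (forall i, P i -> F i \is (d i).-homog) ->
  \prod_(i <- r | P i) F i \is (\sum_(i <- r | P i) d i)%N.-homog.
Proof.
move=> hF; elim: r => [|x r IH]; first by rewrite !big_nil dhomog1.
rewrite !big_cons; case: ifP => // Px; exact: dhomogM (hF _ Px) IH.
Qed.

Lemma cnt_lt N a : (\sum_(i < N) ((i < a)%N : nat))%N = minn a N.
Proof.
elim: N => [|N IH]; first by rewrite big_ord0 minn0.
rewrite big_ord_recr /= IH; case: ltnP => h /=; lia.
Qed.

Lemma cnt_pairs N :
  (N.-1 + \sum_(i < N) \sum_(j < N | (i.+1 < j)%N) 1 = \sum_(i < N) i)%N.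
Proof.
have -> : (\sum_(i < N) \sum_(j < N | (i.+1 < j)%N) 1 =
           \sum_(j < N) \sum_(i < N) ((i < j.-1)%N : nat))%N.
  rewrite exchange_big /=; apply: eq_bigr => j _; rewrite big_mkcond /=.
  by apply: eq_bigr => i _; case: (ltnP j.+1 i) => h; case: (ltnP j i.-1) => h' //=; lia.
under eq_bigr do rewrite cnt_lt.
elim: N => [|N IH]; first by rewrite !big_ord0.
rewrite !big_ord_recr /=.
have -> : (\sum_(i < N) minn (widen_ord (leqnSn N) i).-1 N.+1 =
           \sum_(i < N) minn i.-1 N)%N.
  by apply: eq_bigr => i _ /=; have := ltn_ord i; lia.
move: IH; case: N => [|N] /=; first by rewrite !big_ord0.
lia.
Qed.

Lemma Deltahat_homog N :
  Deltahat N \is (\sum_(i < N) \sum_(j < N | (i.+1 < j)%N) 1)%N.-homog.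
Proof.
apply: dhomog_big => i _; apply: dhomog_big => j _.
rewrite mul_mpolyC; apply: dhomogD. apply: dhomogZ. by rewrite (dhomogX Zq mdeg 1 U_(i)%MM); apply/eqP; exact: mdeg1. rewrite dhomogN. by rewrite (dhomogX Zq mdeg 1 U_(j)%MM); apply/eqP; exact: mdeg1. Qed.


Lemma XnE m (i : 'I_m) : Xn m i = 'X_i.
Proof. by rewrite /Xn; case: insubP => [j _ /val_inj -> //|]; rewrite ltn_ord. Qed.

Definition rt m (k j : nat) : P m :=
  if (j < k)%N then Xn m j else if j == k then 0 else Xn m j.-1.

Lemma RinsE m k (f : P m.+1) : Rins k f = f \mPo [tuple rt m k j | j < m.+1].
Proof. by []. Qed.

Lemma rt_lift m (k : 'I_m.+1) (i : 'I_m) : rt m k (lift k i) = 'X_i.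
Proof.
rewrite /rt /= /bump; case: (leqP k i) => h.
  rewrite /= add1n ifF; last lia.
  by rewrite ifF ?XnE //; lia.
by rewrite /= add0n h XnE.
Qed.

Lemma rt_k m (k : nat) : rt m k k = 0.
Proof. by rewrite /rt ltnn eqxx. Qed.

Lemma Rins_last_Asym N (g : P N.+1) :
  Rins N (Asym g) = Asym (\sum_(k < N.+1) (-1) ^+ (k + N) * Rins k g).
Proof.
rewrite /Asym RinsE rmorph_sum /=.
under eq_bigr do rewrite rmorphM rmorphXn rmorphN1 /= msym_mPo.
rewrite (partition_big (fun s : 'S_N.+1 => (s^-1)%g ord_max) predT) //=.
under [RHS]eq_bigr do rewrite rmorph_sum mulr_sumr.
rewrite [RHS]exchange_big /=; apply: eq_bigr => k _.
rewrite (eq_bigl (fun s : 'S_N.+1 => s k == ord_max)); last first.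
  move=> s /=; apply/eqP/eqP => [<-|<-]; by rewrite ?permKV ?permK.
rewrite (reindex (lift_perm k ord_max)); last first.
  pose ulsf i (s : 'S_N.+1) t := odflt t (unlift (s i) (s (lift i t))).
  have ulsfK i (s : 'S_N.+1) t: lift (s i) (ulsf i s t) = s (lift i t).
    rewrite /ulsf; have:= neq_lift i t.
    by rewrite -(can_eq (permK s)) => /unlift_some[] ? ? ->.
  have inj_ulsf: injective (ulsf k _).
    move=> s; apply: can_inj (ulsf (s k) s^-1%g) _ => k'.
    by rewrite {1}/ulsf ulsfK !permK liftK.
  exists (fun s => perm (inj_ulsf s)) => [s _ | s].
    by apply/permP=> k'; rewrite permE /ulsf lift_perm_lift lift_perm_id liftK.
  move/(s _ =P _) => si0; apply/permP=> k0.
  case: (unliftP k k0) => [k'|] ->; rewrite ?lift_perm_id //.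
  by rewrite lift_perm_lift -si0 permE ulsfK.
apply: eq_big => [s | s _]; first by rewrite lift_perm_id eqxx.
rewrite rmorphM rmorphXn rmorphN1 /=.
have -> : (-1) ^+ lift_perm k ord_max s = (-1) ^+ s * (-1) ^+ (k + N) :> P N.
  rewrite odd_lift_perm -[(-1) ^+ (k + N)]signr_odd oddD addbC signr_addb.
  by [].
rewrite -mulrA; congr (_ * (_ * _)).
rewrite RinsE msym_mPoT; congr (g \mPo _); apply: eq_from_tnth => i.
rewrite !tnth_mktuple; case: (unliftP k i) => [i'|] ->.
  rewrite lift_perm_lift rt_lift msymXU.
  have -> : (lift ord_max (s i') : nat) = s i' by rewrite /= /bump leqNgt ltn_ord.
  by rewrite /rt ltn_ord XnE.
by rewrite lift_perm_id rt_k rmorph0 /= rt_k.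
Qed.

Definition Zs m (i : 'I_m) : m.-tuple (P m) :=
  [tuple (if j == i then 0 else 'X_j) | j < m].

Lemma XZs m (i : 'I_m) (mm : 'X_{1..m}) :
  'X_[mm] \mPo Zs i = if mm i == 0%N then 'X_[mm] else 0.
Proof.
rewrite comp_mpolyX (bigD1 i) //= tnth_mktuple eqxx.
case: eqP => h.
  rewrite h expr0 mul1r (mpolyXE_id _ mm) [RHS](bigD1 i) //= h expr0 mul1r.
  by apply: eq_bigr => j ji; rewrite tnth_mktuple (negbTE ji).
by rewrite expr0n; move/eqP/negbTE: h => ->; rewrite mul0r.
Qed.

Lemma Zs_coef m (i : 'I_m) (p : P m) mm :
  (p \mPo Zs i)@_mm = if mm i == 0%N then p@_mm else 0.
Proof.
have E : p@_mm = \sum_(m0 <- msupp p) p@_m0 * ('X_[m0] : P m)@_mm.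
  by rewrite {1}(mpolyE p) raddf_sum /=; apply: eq_bigr => m0 _; rewrite mcoeffZ.
rewrite comp_mpolyEX raddf_sum /=.
case: ifP => hmm.
  rewrite E; apply: eq_bigr => m0 _; rewrite mcoeffZ XZs; case: ifP => // h0.
  rewrite mcoeff0 mcoeffX; case: eqP => [e|]; last by rewrite mulr0.
  by move: h0; rewrite e hmm.
apply: big1 => m0 _; rewrite mcoeffZ XZs; case: ifP => h0; last by rewrite mcoeff0 mulr0.
rewrite mcoeffX; case: eqP => [e|]; last by rewrite mulr0.
by move: hmm; rewrite -e h0.
Qed.

Lemma XnZ m (i : 'I_m) (x : nat) :
  Xn m x \mPo Zs i = if x == i then 0 else Xn m x.
Proof.
rewrite /Xn; case: insubP => [j _ <-|].
  by rewrite comp_mpolyXU -tnth_nth tnth_mktuple.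
rewrite comp_mpoly0 -leqNgt => h; case: eqP => // e.
Qed.

Lemma rtZ m (i : 'I_m) (j : nat) :
  rt m i.+1 j \mPo Zs i = rt m i j \mPo Zs i.
Proof.
rewrite /rt; case: (ltngtP j i) => h.
- by rewrite ltnS ltnW.
- rewrite ltnNge h /=.
  case: (j =P i.+1) => [->|//]; by rewrite comp_mpoly0 XnZ /= eqxx.
- by rewrite h ltnSn XnZ eqxx comp_mpoly0.
Qed.

Lemma divX_exact m (i : 'I_m) (p : P m) :
  (forall mm : 'X_{1..m}, mm i = 0%N -> p@_mm = 0) -> 'X_i * divX i p = p.
Proof.
move=> hp; rewrite /divX mulr_sumr [RHS](mpolyE p).
rewrite [RHS](bigID (fun mm : 'X_{1..m} => (0 < mm i)%N)) /= [X in _ = _ + X]big1 ?addr0.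
  apply: eq_bigr => mm hmm; rewrite -scalerAr -mpolyXD; congr (_ *: 'X_[_]).
  apply/mnmP => j; rewrite mnmDE mnmBE mnm1E; case: eqP => [<-|] /=; last by rewrite subn0.
  by rewrite add1n subn1 prednK.
by move=> mm; rewrite lt0n negbK => /eqP /hp ->; rewrite scale0r.
Qed.

Lemma Top_exact m (i : 'I_m) (f : P m.+1) :
  'X_i * Top i f = Rins i.+1 f - Rins i f.
Proof.
apply: divX_exact => mm hmm.
have := Zs_coef i (Rins i.+1 f - Rins i f) mm; rewrite hmm eqxx => <-.
rewrite rmorphB /= !RinsE !comp_mpolyA.
have -> : [tuple tnth [tuple rt m i.+1 j | j < m.+1] i0 \mPo Zs i | i0 < m.+1] =
          [tuple tnth [tuple rt m i j | j < m.+1] i0 \mPo Zs i | i0 < m.+1].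
  by apply: eq_from_tnth => j; rewrite !tnth_mktuple rtZ.
by rewrite subrr mcoeff0.
Qed.

Lemma lift_val M (k : 'I_M.+1) (i : 'I_M) :
  (lift k i : nat) = if (k <= i)%N then i.+1 else i.
Proof. by rewrite /= /bump; case: leqP => _; rewrite ?add1n ?add0n. Qed.

Lemma prod_lift (S : comRingType) M (k : 'I_M.+1) (P : pred 'I_M.+1) (F : 'I_M.+1 -> S) :
  \prod_(j < M.+1 | P j) F j = (if P k then F k else 1) * \prod_(j < M | P (lift k j)) F (lift k j).
Proof. by rewrite big_mkcond (bigD1_ord k) //= [in RHS]big_mkcond. Qed.

Lemma prod_cond (S : comRingType) M (c : bool) (P : pred 'I_M) (F : 'I_M -> S) :
  \prod_(j < M | c && P j) F j = if c then \prod_(j < M | P j) F j else 1.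
Proof. by case: c => //; rewrite big_pred0. Qed.

Lemma bumpE (k i : nat) : bump k i = if (k <= i)%N then i.+1 else i.
Proof. by rewrite /bump; case: leqP => _; rewrite ?add1n ?add0n. Qed.

Lemma DhIns (S : comRingType) M (a : S) (k : 'I_M.+1) (z : 'I_M.+1 -> S) (y : 'I_M -> S) :
  z k = 0 -> (forall i, z (lift k i) = y i) ->
  \prod_(i < M.+1) \prod_(j < M.+1 | (i.+1 < j)%N) (a * z i - z j) =
  (\prod_(j < M | (k < j)%N) - y j) * (\prod_(i < M | (i.+1 < k)%N) (a * y i)) *
  (\prod_(i < M | i.+1 == k) \prod_(j < M | j == k :> nat) (a * y i - y j)) *
  \prod_(i < M) \prod_(j < M | (i.+1 < j)%N) (a * y i - y j).
Proof.
move=> zk zl.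
rewrite (prod_lift k) (prod_lift k) ltnNge leqnSn mul1r zk mulr0.
have -> : \prod_(j < M | (k.+1 < lift k j)%N) (0 - z (lift k j)) =
          \prod_(j < M | (k < j)%N) - y j.
  apply: eq_big => j; last by rewrite zl sub0r.
  rewrite lift_val; case: (leqP k j) => h; lia.
rewrite -!mulrA; congr (_ * _).
under eq_bigr => i _.
  rewrite (prod_lift k) zk subr0 zl.
  rewrite (bigID (fun j : 'I_M => (i.+1 < j)%N)) /=.
  have -> : \prod_(j < M | ((lift k i).+1 < lift k j)%N && (i.+1 < j)%N)
               (a * y i - z (lift k j)) =
            \prod_(j < M | (i.+1 < j)%N) (a * y i - y j).
    apply: eq_big => j; last by rewrite zl.
    rewrite !lift_val; case: (leqP k i) => h1; case: (leqP k j) => h2; lia.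
  have -> : \prod_(j < M | ((lift k i).+1 < lift k j)%N && ~~ (i.+1 < j)%N)
               (a * y i - z (lift k j)) =
            \prod_(j < M | (i.+1 == k) && (j == k :> nat)) (a * y i - y j).
    apply: eq_big => j; last by rewrite zl.
    rewrite !lift_val; case: (leqP k i) => h1; case: (leqP k j) => h2;
      case: eqP => e1; case: eqP => e2 /=; lia.
  rewrite prod_cond.
  have -> : ((lift k i).+1 < k)%N = (i.+1 < k)%N.
    rewrite lift_val; case: (leqP k i) => h; lia.
  over.
rewrite big_split [in RHS](big_mkcond (fun i : 'I_M => (i.+1 < k)%N)).
congr (_ * _).
rewrite big_split mulrC; congr (_ * _).
by rewrite [RHS]big_mkcond.
Qed.

Lemma RinsX m k (j : 'I_m.+1) : Rins k ('X_j : P m.+1) = rt m k j.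
Proof. by rewrite RinsE comp_mpolyXU -tnth_nth tnth_mktuple. Qed.

Lemma Rins_Deltahat N (k : 'I_N.+1) :
  Rins k (Deltahat N.+1) =
  (\prod_(j < N | (k < j)%N) - 'X_j) * (\prod_(i < N | (i.+1 < k)%N) (q%:MP * 'X_i)) *
  (\prod_(i < N | i.+1 == k) \prod_(j < N | j == k :> nat) (q%:MP * 'X_i - 'X_j)) *
  Deltahat N.
Proof.
rewrite /Deltahat {1}RinsE rmorph_prod /=.
under eq_bigr => i _ do rewrite rmorph_prod /=.
under eq_bigr => i _ do under eq_bigr => j _ do
  rewrite rmorphB rmorphM /= comp_mpolyC -!RinsE !RinsX.
apply: DhIns; first exact: rt_k.
exact: rt_lift.
Qed.

Lemma prod_constE (S : comRingType) I (r : seq I) (P : pred I) (c : S) :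
  \prod_(i <- r | P i) c = c ^+ (\sum_(i <- r | P i) 1)%N.
Proof.
elim: r => [|x r IH]; first by rewrite !big_nil.
by rewrite !big_cons; case: (P x) => //; rewrite IH add1n exprS.
Qed.

Lemma prodNE (S : comRingType) N (P : pred 'I_N) (F : 'I_N -> S) :
  \prod_(j < N | P j) - F j = (-1) ^+ (\sum_(j < N | P j) 1)%N * \prod_(j < N | P j) F j.
Proof.
rewrite -prod_constE -big_split; apply: eq_bigr => j _ /=; by rewrite mulN1r.
Qed.

Lemma prodcE (S : comRingType) N (P : pred 'I_N) (c : S) (F : 'I_N -> S) :
  \prod_(j < N | P j) (c * F j) = c ^+ (\sum_(j < N | P j) 1)%N * \prod_(j < N | P j) F j.
Proof. by rewrite -prod_constE -big_split. Qed.

Lemma cnt_gt N k : (\sum_(j < N | (k < j)%N) 1 = N - k.+1)%N.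
Proof.
elim: N => [|N IH]; first by rewrite big_ord0.
rewrite big_mkcond big_ord_recr /= -big_mkcond /= IH; case: ltnP => h /=; lia.
Qed.

Lemma cnt_lt2 N a : (\sum_(j < N | (j < a)%N) 1 = minn a N)%N.
Proof. by rewrite -cnt_lt big_mkcond; apply: eq_bigr => j _; case: ifP. Qed.

Definition Lk N a : P N := \prod_(j < N | (j < a)%N) 'X_j.
Definition Rk N b : P N := \prod_(j < N | (b < j)%N) 'X_j.
Definition V N (i : nat) : P N := q%:MP ^+ i * \prod_(j < N | (j : nat) != i) 'X_j.
Definition W N (k : nat) : P N :=
  (if (0 < k)%N then V N k.-1 else 0) - (if (k < N)%N then V N k else 0).

Lemma ExtraE M (k : nat) :
  \prod_(i < M.+1 | i.+1 == k) \prod_(j < M.+1 | j == k :> nat) (q%:MP * 'X_i - 'X_j) =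
  if (0 < k)%N && (k < M.+1)%N then q%:MP * 'X_(inord k.-1) - 'X_(inord k) else 1 :> P M.+1.
Proof.
case: ifP => [/andP[k0 kN] | h].
  rewrite (big_pred1 (inord k.-1)) => [|i]; last first.
    by rewrite /= -(inj_eq val_inj) /= inordK; lia.
  rewrite (big_pred1 (inord k)) // => j.
  by rewrite /= -(inj_eq val_inj) /= inordK.
apply: big1 => i /eqP hi; apply: big1 => j /eqP hj.
have := ltn_ord i; have := ltn_ord j; move: h; rewrite -hi; lia.
Qed.

Lemma V_split N (i : nat) : V N i = q%:MP ^+ i * (Lk N i * Rk N i).
Proof.
rewrite /V /Lk /Rk (bigID (fun j : 'I_N => (j < i)%N)) /=; congr (_ * (_ * _)).
  by apply: eq_bigl => j; case: ltngtP.
by apply: eq_bigl => j; case: ltngtP.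
Qed.

From mathcomp Require Import ring.

Lemma Lk_pred M k : (0 < k)%N -> (k <= M.+1)%N ->
  Lk M.+1 k = Lk M.+1 k.-1 * 'X_(inord k.-1).
Proof.
move=> k0 kN; rewrite /Lk (bigD1 (inord k.-1)) /=; last by rewrite inordK; lia.
rewrite mulrC; congr (_ * _); apply: eq_bigl => j.
rewrite -(inj_eq val_inj) /= inordK; last lia.
by case: ltngtP => h; lia.
Qed.

Lemma Rk_succ M k : (0 < k)%N -> (k < M.+1)%N ->
  Rk M.+1 k.-1 = 'X_(inord k) * Rk M.+1 k.
Proof.
move=> k0 kN; rewrite /Rk (bigD1 (inord k)) /=; last by rewrite inordK; lia.
congr (_ * _); apply: eq_bigl => j.
rewrite -(inj_eq val_inj) /= inordK; last lia.
by case: ltngtP => h; lia.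
Qed.

Lemma Lk0 N : Lk N 0 = 1.
Proof. by rewrite /Lk big_pred0. Qed.

Lemma Rk_last M : Rk M.+1 M = 1.
Proof. by rewrite /Rk big_pred0 // => j; rewrite ltnNge -ltnS ltn_ord. Qed.

Lemma sign_odd (a : nat) : odd a -> (-1) ^+ a = -1 :> P a.
Proof. by move=> h; rewrite -signr_odd h expr1. Qed.

Lemma signE (S : pzRingType) a : (-1) ^+ a = (if odd a then -1 else 1) :> S.
Proof. by rewrite -signr_odd; case: odd. Qed.

Lemma sign2 (S : pzRingType) k M : (k < M.+1)%N ->
  (-1) ^+ (k + M.+1) * (-1) ^+ (M.+1 - k.+1) = -1 :> S.
Proof.
move=> h; rewrite -exprD signE.
have -> : (k + M.+1 + (M.+1 - k.+1) = (M + M).+1)%N by lia.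
by rewrite /= addnn odd_double.
Qed.

Lemma Ek M (k : 'I_M.+2) :
  (-1) ^+ (k + M.+1) * Rins k (Deltahat M.+2) = Deltahat M.+1 * W M.+1 k.
Proof.
rewrite Rins_Deltahat ExtraE prodNE prodcE cnt_gt.
have e1 : \prod_(i < M.+1 | (i.+1 < k)%N) 'X_i = Lk M.+1 k.-1 :> P M.+1.
  by apply: eq_bigl => i; rewrite ltn_predRL.
have e2 : (\sum_(i < M.+1 | (i.+1 < k)%N) 1 = k.-1)%N.
  rewrite (eq_bigl (fun i : 'I_M.+1 => (i < k.-1)%N)) ?cnt_lt2; last first.
    by move=> i; rewrite ltn_predRL.
  by have := ltn_ord k; lia.
rewrite e1 e2 -/(Rk M.+1 k); clear e1 e2.
move: k => [k hk] /=.
rewrite /W !V_split.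
have [-> | k0] := posnP k.
  rewrite /= Lk0 expr0 mul1r !mulr1 sub0r !mulrA sign2 //; ring.

case: (ltngtP k M.+1) => hkM; last first.
- rewrite hkM /=.
  have -> : (M.+1 - M.+2 = 0)%N by lia.
  have -> : Rk M.+1 M.+1 = 1 by rewrite /Rk big_pred0 // => j; rewrite ltnNge ltnW.
  rewrite signE addnn odd_double Rk_last /=; ring.
- lia.
rewrite (Rk_succ k0 hkM) (Lk_pred k0 (ltnW hkM)) !mulrA sign2 // /=.
have -> : k = k.-1.+1 by lia.
rewrite /= exprS; ring.
Qed.

Lemma RinsM m k (x y : P m.+1) : Rins k (x * y) = Rins k x * Rins k y.
Proof. by rewrite !RinsE rmorphM. Qed.

Lemma RinsC m k (c : Zq) : Rins k (c%:MP : P m.+1) = c%:MP.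
Proof. by rewrite RinsE comp_mpolyC. Qed.

Lemma sumW N (a : nat -> P N) :
  \sum_(k < N.+1) W N k * a k = \sum_(i < N) V N i * (a i.+1 - a i).
Proof.
rewrite /W; under eq_bigr do rewrite mulrBl.
rewrite sumrB big_ord_recl big_ord_recr.
have -> : (if (0 < (ord0 : 'I_N.+1))%N then V N (ord0 : 'I_N.+1).-1 else 0)
           * a (ord0 : 'I_N.+1) = 0 by rewrite mul0r.
have -> : (if ((ord_max : 'I_N.+1) < N)%N then V N (ord_max : 'I_N.+1) else 0)
           * a (ord_max : 'I_N.+1) = 0 by rewrite /= ltnn mul0r.
rewrite add0r /= addr0.
under [RHS]eq_bigr do rewrite mulrBr.
rewrite sumrB; congr (_ - _).
  by apply: eq_bigr => i _; rewrite ltn_ord.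
Qed.

Lemma Rins_sum_Dh M (f : P M.+2) :
  \sum_(k < M.+2) (-1) ^+ (k + M.+1) * Rins k (f * Deltahat M.+2) =
  (\prod_(i < M.+1) 'X_i) * (Sop f * Deltahat M.+1).
Proof.
set Pi := \prod_(i < M.+1) 'X_i.
have -> : Pi * (Sop f * Deltahat M.+1) = Deltahat M.+1 * (Pi * Sop f) by ring.
under eq_bigr => k _ do rewrite RinsM mulrCA Ek [Rins k f * _]mulrC -mulrA.
rewrite -mulr_sumr; congr (_ * _).
rewrite (sumW (fun k => Rins k f)) /Sop mulr_sumr; apply: eq_bigr => i _.
rewrite -mul_mpolyC rmorphXn /= mulrCA /V -mulrA; congr (_ * _).
have -> : Pi = 'X_i * \prod_(j < M.+1 | j != i) 'X_j by rewrite /Pi (bigD1 i).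
by rewrite -mulrA mulrCA Top_exact.
Qed.


Lemma Pi_sym N (s : 'S_N) : msym s (\prod_(i < N) 'X_i : P N) = \prod_(i < N) 'X_i.
Proof.
rewrite rmorph_prod /=; under eq_bigr do rewrite msymXU.
by rewrite [RHS](reindex_inj (@perm_inj _ s)).
Qed.

Lemma Pi_neq0 N : (\prod_(i < N) 'X_i : P N) != 0.
Proof.
apply/prodf_neq0 => i _; apply/eqP => /(congr1 (mcoeff U_(i))).
by rewrite mcoeffXU eqxx mcoeff0 => /eqP; rewrite oner_eq0.
Qed.

Lemma prod_recr (S : comRingType) N (P : pred 'I_N.+1) (F : 'I_N.+1 -> S) :
  \prod_(i < N.+1 | P i) F i =
  (\prod_(i < N | P (widen_ord (leqnSn N) i)) F (widen_ord (leqnSn N) i)) *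
  (if P ord_max then F ord_max else 1).
Proof. by rewrite big_mkcond big_ord_recr /= -big_mkcond. Qed.

Lemma Rins_Delta_last N :
  Rins N (Delta N.+1) = Delta N * \prod_(i < N) 'X_i.
Proof.
rewrite /Delta prod_recr.
have -> : \prod_(j < N.+1 | ((ord_max : 'I_N.+1) < j)%N)
            ('X_(ord_max : 'I_N.+1) - 'X_j) = 1 :> P N.+1.
  by apply: big_pred0 => j; rewrite ltnNge -ltnS ltn_ord.
rewrite mulr1 RinsE rmorph_prod -big_split; apply: eq_bigr => i _.
rewrite rmorph_prod prod_recr /= ltn_ord; congr (_ * _).
  apply: eq_bigr => j _.
  by rewrite comp_mpolyB !comp_mpolyXU -!tnth_nth !tnth_mktuple /rt /= !ltn_ord !XnE.
by rewrite comp_mpolyB !comp_mpolyXU -!tnth_nth !tnth_mktuple /rt /= ltnn eqxx ltn_ord XnE subr0.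
Qed.



Lemma recursion M (f : P M.+2) (c : Zq) :
  Asym (f * Deltahat M.+2) = c%:MP * Delta M.+2 ->
  Asym (Sop f * Deltahat M.+1) = c%:MP * Delta M.+1.
Proof.
move=> h; have := congr1 (@Rins M.+1 M.+1) h.
rewrite Rins_last_Asym Rins_sum_Dh Asym_symmul; last exact: Pi_sym.
rewrite RinsM RinsC Rins_Delta_last mulrA [RHS]mulrC.
by move/(mulfI (Pi_neq0 M.+1)).
Qed.

Lemma Asym1 (g : P 1) : Asym g = g.
Proof.
rewrite /Asym (bigD1 1%g) //= big1 ?addr0; first by rewrite odd_perm1 mul1r msym1m.
move=> s /eqP []; apply/permP => i; by rewrite !ord1.
Qed.

Lemma Delta1 : Delta 1 = 1.
Proof. by rewrite /Delta big_ord1; apply: big1 => -[[|k] hk]. Qed.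

Lemma Deltahat1 : Deltahat 1 = 1.
Proof. by rewrite /Deltahat big_ord1; apply: big1 => -[[|[|k]] hk]. Qed.

Lemma main_ind N (g : P N.+1) (c : Zq) :
  Asym (g * Deltahat N.+1) = c%:MP * Delta N.+1 -> Ops g = c%:MP.
Proof.
elim: N g => [|N IH] g h.
  by move: h; rewrite Deltahat1 Delta1 Asym1 !mulr1.
exact: IH (recursion h).
Qed.

Theorem mainTheorem16 (n : nat) (f : {mpoly int[n.+1]}) :
  f \is [in int[n.+1], n.-homog] ->
  qdivsym (map_mpoly (@polyC int) f) =
  (embed1 n (Ops (map_mpoly (@polyC int) f)))%:F.
Proof.
move=> hf; set F := map_mpoly (@polyC int) f.
have hF : F \is n.-homog.
  apply/dhomogP => m; rewrite mcoeff_msupp mcoeff_map_mpoly polyC_eq0 -mcoeff_msupp.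
  by move=> hm; have := dhomog_mf hf hm.
have hG : F * Deltahat n.+1 \is (\sum_(i < n.+1) i)%N.-homog.
  rewrite -cnt_pairs; exact: dhomogM hF (Deltahat_homog n.+1).
have [c hc] := Asym_const hG.
rewrite qdivsymE hc (main_ind hc) /embed1 comp_mpolyC rmorphM mulfK //.
by rewrite tofrac_eq0 Delta_neq0.
Qed.
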